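(* Let $\phi$ be a strictly convex norm on $\mathbf{R}^n$ of class $\mathcal{C}^2$ on $\mathbf{R}^n\setminus\{0\}$ and $K\subseteq\mathbf{R}^n$ closed. Then $\rho^\phi_K:\mathbf{R}^n\to[1,\infty]$ is upper semicontinuous and $$\rho^\phi_K(x)=t\,\rho^\phi_K(a+t(x-a))\quad\text{for }x\in\mathbf{R}^n,\ a\in\xi^\phi_K(x),\ 0<t\le\rho^\phi_K(x),\ t<\infty.$$ Moreover, $\mathrm{Cut}^\phi(K)=\{x\in\mathbf{R}^n:\rho^\phi_K(x)=1\}$.
   Context: A norm $\phi$ is strictly convex if $\phi(a+b)=\phi(a)+\phi(b)$ implies $\phi(b)a=\phi(a)b$. For closed $K$: $\delta^\phi_K(x)=\inf\{\phi(y-x):y\in K\}$; $\xi^\phi_K(x)=K\cap\{w:\phi(x-w)=\delta^\phi_K(x)\}$; $\rho^\phi_K(x)=\sup\bigl(\mathbf{R}\cap\{s:\delta^\phi_K(a+s(x-a))=s\,\delta^\phi_K(x)\}\bigr)$ for any $a\in\xi^\phi_K(x)$ (independent of the choice of $a$). $N^\phi(K)=\{(a,\eta):a\in K,\ \phi(\eta)=1,\ \delta^\phi_K(a+s\eta)=s\text{ for some }s>0\}$, $r^\phi_K(a,\eta)=\sup\{s>0:\delta^\phi_K(a+s\eta)=s\}$, and $\mathrm{Cut}^\phi(K)=\{a+r^\phi_K(a,\eta)\eta:(a,\eta)\in N^\phi(K),\ r^\phi_K(a,\eta)<\infty\}$. *)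

(* Defs.v *)
From HB Require Import structures.
From mathcomp Require Import all_boot all_order all_algebra.
From mathcomp Require Import all_classical all_reals all_analysis.
Set Implicit Arguments. Unset Strict Implicit. Unset Printing Implicit Defensive.
Import Order.TTheory GRing.Theory Num.Theory.
Import numFieldNormedType.Exports.
Local Open Scope classical_set_scope.
Local Open Scope ring_scope.

Section Defs.
Variables (R : realType) (n : nat).
Notation V := 'rV[R]_n.
Implicit Types (phi : V -> R) (K : set V).

Definition is_norm phi : Prop :=
  [/\ forall x, phi x = 0 -> x = 0,
      forall (c : R) x, phi (c *: x) = `|c| * phi x &
      forall x y, phi (x + y) <= phi x + phi y].

Definition strictly_convex phi : Prop :=
  forall a b, phi (a + b) = phi a + phi b -> phi b *: a = phi a *: b.

Definition ebasis (i : 'I_n) : V := delta_mx 0 i.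

Definition C2_off_origin phi : Prop :=
  forall x : V, x != 0 ->
    {for x, continuous phi} /\
    forall i j : 'I_n,
      [/\ derivable phi x (ebasis i),
          {for x, continuous (fun y => 'D_(ebasis i) phi y)},
          derivable (fun y => 'D_(ebasis i) phi y) x (ebasis j) &
          {for x, continuous (fun y => 'D_(ebasis j) (fun z => 'D_(ebasis i) phi z) y)}].

Definition dist_phi phi K (x : V) : R := inf [set phi (y - x) | y in K].

Definition xi_phi phi K (x : V) : set V :=
  K `&` [set w | phi (x - w) = dist_phi phi K x].

Definition rho_at phi K (x a : V) : \bar R :=
  ereal_sup [set s%:E | s in [set s : R |
     dist_phi phi K (a + s *: (x - a)) = s * dist_phi phi K x]].

(* rho^phi_K(x), computed with some a in xi^phi_K(x) (the value is independent of a) *)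
Definition rho_phi phi K (x : V) : \bar R := rho_at phi K x (xget 0 (xi_phi phi K x)).

Definition normal_bundle phi K (a eta : V) : Prop :=
  [/\ K a, phi eta = 1 &
      exists2 s : R, 0 < s & dist_phi phi K (a + s *: eta) = s].

Definition reach_phi phi K (a eta : V) : \bar R :=
  ereal_sup [set s%:E | s in [set s : R | 0 < s /\ dist_phi phi K (a + s *: eta) = s]].

Definition cut_phi phi K : set V :=
  [set x | exists a eta, normal_bundle phi K a eta /\
     exists r : R, reach_phi phi K a eta = r%:E /\ x = a + r *: eta].

End Defs.

Definition upper_semicontinuous {X : topologicalType} {R : numFieldType}
  (f : X -> \bar R) : Prop :=
  forall x (c : R), (f x < c%:E)%E -> exists2 U, nbhs x U & forall y, U y -> (f y < c%:E)%E.

(* Main.v *)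
Require Import Defs.
From HB Require Import structures.
From mathcomp Require Import all_boot all_order all_algebra.
From mathcomp Require Import all_classical all_reals all_analysis.
From mathcomp Require Import ring lra.
Import Order.TTheory GRing.Theory Num.Theory.
Import numFieldNormedType.Exports.
Local Open Scope classical_set_scope.
Local Open Scope ring_scope.

Section S.
Variables (R : realType) (n : nat) (phi : 'rV[R]_n -> R) (K : set 'rV[R]_n).
Hypothesis Hnorm : is_norm phi.
Notation V := 'rV[R]_n.

Lemma lipR (f : R -> R) L : 0 <= L ->
  (forall s s', `|f s - f s'| <= L * `|s - s'|) -> continuous f.
Proof.
move=> L0 Hf x; apply/cvgrPdist_lt => e e0.
have Ce : 0 < e / (L + 1) by apply: divr_gt0 => //; lra.
near=> y.
apply: le_lt_trans (Hf _ _) _.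
have : `|x - y| < e / (L + 1).
  near: y; move: (e / (L + 1)) Ce.
  by apply/cvgrPdist_lt; exact: cvg_id.
move=> h; apply: le_lt_trans (ler_wpM2l L0 (ltW h)) _.
rewrite mulrA ltr_pdivrMr; last lra.
nra.
Unshelve. all: by end_near.
Qed.

Lemma sup_attained (P : set R) (g : R -> R) r : {for r, continuous g} ->
  (forall s, P s -> g s = 0 /\ s <= r) ->
  (r%:E <= ereal_sup [set s%:E | s in P])%E -> g r = 0.
Proof.
move=> Hc HP Hr; have [//|gr] := eqVneq (g r) 0.
have gr0 : 0 < `|g r| by rewrite normr_gt0.
have H1 := (@cvgrPdist_lt _ _ _ (nbhs r) (nbhs_filter r) g (g r)).1 Hc _ gr0.
have [e e0 He] := (nbhs_ballP _ _).1 H1.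
have Hs : forall s, P s -> s <= r - e.
  move=> s Ps; have [g0 sr] := HP s Ps.
  rewrite leNgt; apply/negP => Hs.
  have : ball r e s.
    rewrite /ball /= ger0_norm; lra.
  by move/He; rewrite /= g0 subr0 ltxx.
have : (ereal_sup [set s%:E | s in P] <= (r - e)%:E)%E.
  by apply: ge_ereal_sup => _ [s Ps <-]; rewrite lee_fin; exact: Hs.
move=> h; exfalso; have := le_trans Hr h; rewrite lee_fin; move: e0 => /= e0; lra.
Qed.

Lemma phiZ c x : phi (c *: x) = `|c| * phi x.
Proof. by case: Hnorm. Qed.
Lemma phiD x y : phi (x + y) <= phi x + phi y.
Proof. by case: Hnorm. Qed.
Lemma phi_eq0 x : phi x = 0 -> x = 0.
Proof. by case: Hnorm => h _ _; apply: h. Qed.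
Lemma phi0 : phi 0 = 0.
Proof. by rewrite -(scale0r (0:V)) phiZ normr0 mul0r. Qed.
Lemma phiN x : phi (- x) = phi x.
Proof. by rewrite -scaleN1r phiZ normrN normr1 mul1r. Qed.
Lemma phi_ge0 x : 0 <= phi x.
Proof.
have := phiD x (- x); rewrite subrr phi0 phiN; lra.
Qed.
Lemma phiB x y : phi (x - y) = phi (y - x).
Proof. by rewrite -phiN opprB. Qed.
Lemma phiZp c x : 0 <= c -> phi (c *: x) = c * phi x.
Proof. by move=> c0; rewrite phiZ ger0_norm. Qed.
Lemma phi_lip x y : `|phi x - phi y| <= phi (x - y).
Proof.
have h1 := phiD (x - y) y; rewrite subrK in h1.
have h2 := phiD (y - x) x; rewrite subrK -phiB in h2.
rewrite ler_norml; apply/andP; split; lra.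
Qed.

Lemma phi_sum (I : Type) (r : seq I) (P : pred I) (F : I -> V) :
  phi (\sum_(i <- r | P i) F i) <= \sum_(i <- r | P i) phi (F i).
Proof.
apply: (big_ind2 (fun a b => phi a <= b)); first by rewrite phi0.
  by move=> a b c d h1 h2; apply: le_trans (phiD _ _) _; apply: lerD.
by [].
Qed.

Lemma coord_le_norm (v : V) i : `|v 0 i| <= `|v|.
Proof.
have /mapP[j Hj ->] : `|v ord0 i| \in [seq `|v x.1 x.2| | x : 'I_1 * 'I_n].
  by apply/mapP; exists (ord0, i) => //=; rewrite mem_enum.
by rewrite [leRHS]/Num.norm /= mx_normrE; apply/bigmax_geP; right => /=; exists j.
Qed.

Lemma phi_le_norm : exists C, 0 <= C /\ forall v : V, phi v <= C * `|v|.
Proof.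
exists (\sum_(j < n) phi (delta_mx 0 j)); split.
  by apply: sumr_ge0 => j _; exact: phi_ge0.
move=> v; rewrite {1}(row_sum_delta v).

apply: (le_trans (phi_sum _ _ _ _)).
rewrite mulr_suml; apply: ler_sum => j _.
rewrite phiZ mulrC; apply: ler_wpM2l; first exact: phi_ge0.
exact: coord_le_norm.
Qed.

Lemma phi_cont : continuous phi.
Proof.
have [C [C0 HC]] := phi_le_norm.
move=> x; apply/(@cvgrPdist_lt _ _ _ (nbhs x) (nbhs_filter x)) => e e0.
have Ce : 0 < e / (C + 1) by apply: divr_gt0 => //; lra.
near=> y.
apply: le_lt_trans (phi_lip _ _) _.
apply: le_lt_trans (HC _) _.
have : `|x - y| < e / (C + 1).
  near: y; move: (e / (C + 1)) Ce.
  by apply/(@cvgrPdist_lt _ _ _ (nbhs x) (nbhs_filter x) id); exact: cvg_id.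
move=> h; apply: le_lt_trans (ler_wpM2l C0 (ltW h)) _.
rewrite mulrA ltr_pdivrMr; last lra.
nra.
Unshelve. all: by end_near.
Qed.

Lemma lip_contL (f : V -> R) L : 0 <= L ->
  (forall x y, `|f x - f y| <= L * phi (x - y)) -> continuous f.
Proof.
move=> L0 Hf0.
have [C0' [C00 HC0]] := phi_le_norm.
pose C := L * C0'.
have C0 : 0 <= C by rewrite mulr_ge0.
have HC : forall v, L * phi v <= C * `|v|.
  by move=> v; rewrite /C -mulrA ler_wpM2l.
have Hf : forall x y, `|f x - f y| <= L * phi (x - y) := Hf0.
move=> x; apply/(@cvgrPdist_lt _ _ _ (nbhs x) (nbhs_filter x)) => e e0.
have Ce : 0 < e / (C + 1) by apply: divr_gt0 => //; lra.
near=> y.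
apply: le_lt_trans (Hf _ _) _.
apply: le_lt_trans (HC _) _.
have : `|x - y| < e / (C + 1).
  near: y; move: (e / (C + 1)) Ce.
  by apply/(@cvgrPdist_lt _ _ _ (nbhs x) (nbhs_filter x) id); exact: cvg_id.
move=> h; apply: le_lt_trans (ler_wpM2l C0 (ltW h)) _.
rewrite mulrA ltr_pdivrMr; last lra.
nra.
Unshelve. all: by end_near.
Qed.

Lemma lip_cont (f : V -> R) : (forall x y, `|f x - f y| <= phi (x - y)) ->
  continuous f.
Proof.
move=> Hf; apply: (@lip_contL f 1) => // x y; rewrite mul1r; exact: Hf.
Qed.

Lemma phi_ge_norm : exists2 m, 0 < m & forall v : V, m * `|v| <= phi v.
Proof.
have phiC := phi_cont.
pose S := [set v : V | `|v| = 1].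
have Scl : closed S.
  rewrite (_ : S = (fun v : V => `|v|) @^-1` [set x : R | x = 1]) //.
  apply: preimage_closed; last exact: closed_eq.
  move=> x _; exact: norm_continuous.
have Sb : bounded_set S.
  by exists 1; split => // M M1 v /= ->; exact: ltW.
have Scp : compact S := bounded_closed_compact Sb Scl.
have unit v : v != 0 -> S (`|v|^-1 *: v).
  move=> v0; rewrite /S /= normrZ normfV normr_id mulVf //.
  by rewrite normr_eq0.
have [S0|S0] := pselect (S !=set0); last first.
  exists 1 => // v; have [->|v0] := eqVneq v 0.
    by rewrite normr0 mulr0 phi_ge0.
  by exfalso; apply: S0; exists (`|v|^-1 *: v); exact: unit.
have [c Sc cmin] := EVT_min_rV S0 Scp (@continuous_subspaceT _ _ S phi phiC).
have Sc1 : `|c| = 1 by move: Sc; rewrite inE.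
have m0 : 0 < phi c.
  rewrite lt_def phi_ge0 andbT; apply/eqP => /phi_eq0 c0.
  by move: Sc1; rewrite c0 normr0 => /eqP; rewrite eq_sym oner_eq0.
exists (phi c) => // v; have [->|v0] := eqVneq v 0.
  by rewrite normr0 mulr0 phi_ge0.
have nv0 : 0 < `|v| by rewrite normr_gt0.
have -> : phi v = `|v| * phi (`|v|^-1 *: v).
  by rewrite phiZp ?invr_ge0 ?ltW // mulrA mulfV ?mul1r // gt_eqF.
rewrite mulrC (ler_wpM2l (ltW nv0)) //; apply: cmin; rewrite inE; exact: unit.
Qed.

Hypothesis HK : closed K.
Hypothesis HK0 : K !=set0.
Notation d := (dist_phi phi K).
Notation xi := (xi_phi phi K).

Lemma d_hlb x : has_lbound [set phi (y - x) | y in K].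
Proof. by exists 0 => _ [y _ <-]; exact: phi_ge0. Qed.

Lemma d_ne x : [set phi (y - x) | y in K] !=set0.
Proof. by case: HK0 => y Ky; exists (phi (y - x)), y. Qed.

Lemma d_lb x y : K y -> d x <= phi (y - x).
Proof. by move=> Ky; apply: ge_inf; [exact: d_hlb | exists y]. Qed.

Lemma d_glb x c : (forall y, K y -> c <= phi (y - x)) -> c <= d x.
Proof. by move=> H; apply: lb_le_inf; [exact: d_ne | move=> _ [y Ky <-]; apply: H]. Qed.

Lemma d_ge0 x : 0 <= d x.
Proof. by apply: d_glb => y _; exact: phi_ge0. Qed.

Lemma d_lip x y : `|d x - d y| <= phi (x - y).
Proof.
have h1 : d x - phi (x - y) <= d y.
  apply: d_glb => z Kz; have := d_lb x _ Kz; have := phiD (z - y) (y - x).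
  rewrite addrA subrK phiB [phi (y - x)]phiB; lra.
have h2 : d y - phi (x - y) <= d x.
  apply: d_glb => z Kz; have := d_lb y _ Kz; have := phiD (z - x) (x - y).
  rewrite addrA subrK; lra.
rewrite ler_norml; apply/andP; split; lra.
Qed.

Lemma d_cont : continuous d.
Proof. exact: lip_cont d_lip. Qed.

Lemma dK x : K x -> d x = 0.
Proof.
move=> Kx; apply/eqP; rewrite eq_le d_ge0 andbT.
by have := d_lb x _ Kx; rewrite subrr phi0.
Qed.

Lemma phix_cont x : continuous (fun a : V => phi (x - a)).
Proof.
apply: lip_cont => a b; apply: le_trans (phi_lip _ _) _.
by rewrite opprB addrC addrA subrK phiB.
Qed.

Lemma Bcompact x M : compact (K `&` [set a | phi (x - a) <= M]).
Proof.
have [m m0 Hm] := phi_ge_norm.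
pose B := K `&` [set a | phi (x - a) <= M].
have fc := phix_cont x.
have Bcl : closed B.
  apply: closedI => //.
  rewrite (_ : [set a | _] = (fun a => phi (x - a)) @^-1` [set r : R | r <= M]) //.
  apply: preimage_closed; last exact: closed_le.
  by move=> a _; exact: fc.
have Bb : bounded_set B.
  exists (`|x| + M / m); split; first exact: num_real.
  move=> M' hM a [_ /= Ha]; apply: ltW; apply: le_lt_trans hM.
  have : m * `|x - a| <= M := le_trans (Hm _) Ha.
  rewrite -ler_pdivlMl // => h.
  have : `|a| <= `|x| + `|x - a|.
    by have := ler_normD x (a - x); rewrite [x + (a - x)]addrC subrK distrC.
  rewrite mulrC in h; lra.
exact: bounded_closed_compact Bb Bcl.
Qed.

Lemma nearest x : exists a, xi x a.
Proof.
pose B := K `&` [set a | phi (x - a) <= d x + 1].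
have fc := phix_cont x.
have B0 : B !=set0.
  have h1 : d x < d x + 1 by rewrite ltrDl.
  have [_ [y Ky <-] hy] := inf_lt (d_ne x) h1.
  by exists y; split => //=; rewrite phiB ltW.
have Bc : compact B := Bcompact x (d x + 1).
have [c Bc' cmin] := EVT_min_rV B0 Bc (@continuous_subspaceT _ _ B _ fc).
move: Bc'; rewrite inE => -[Kc /= Hc].
exists c; split => //=; apply/eqP; rewrite eq_le; apply/andP; split; last first.
  by rewrite phiB; exact: d_lb.
apply: d_glb => y Ky; rewrite [phi (y - x)]phiB.
have [Hy|Hy] := leP (phi (x - y)) (d x + 1).
  by apply: cmin; rewrite inE.
by apply: ltW; apply: le_lt_trans Hc Hy.
Qed.

Definition Sx x a := [set s : R | d (a + s *: (x - a)) = s * d x].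

Lemma rho_atE x a : rho_at phi K x a = ereal_sup [set s%:E | s in Sx x a].
Proof. by []. Qed.

Lemma addBl (a v : V) : a + v - a = v.
Proof. by rewrite addrC addKr. Qed.

Lemma F5 x a : Sx x a 1.
Proof. by rewrite /Sx /= scale1r addrC subrK mul1r. Qed.

Lemma F1 x a s : xi x a -> 0 <= s <= 1 -> Sx x a s.
Proof.
move=> [Ka /= Ha] /andP[s0 s1]; rewrite /Sx /=.
apply/eqP; rewrite eq_le; apply/andP; split.
  have := d_lb (a + s *: (x - a)) _ Ka.
  by rewrite opprD addNKr phiN phiZp // Ha.
apply: d_glb => y Ky.
have h1 := d_lb x _ Ky.
have h2 := phiD (y - (a + s *: (x - a))) ((a + s *: (x - a)) - x).
rewrite addrA subrK in h2.
have E : (a + s *: (x - a)) - x = (1 - s) *: (a - x).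
  by apply/rowP => i; rewrite !mxE; ring.
rewrite E phiZp ?subr_ge0 // [phi (a - x)]phiB Ha in h2.
rewrite [phi (y - x)]phiB in h1; rewrite -[phi (y - x)]phiB in h2. 
nra.
Qed.

Lemma F2 x a s : xi x a -> 0 < s -> Sx x a s -> xi (a + s *: (x - a)) a.
Proof.
move=> [Ka /= Ha] s0 Hs; split => //=.
by rewrite addBl phiZp ?ltW // Ha Hs.
Qed.

Lemma F4 x a t u : Sx x a t ->
  (Sx (a + t *: (x - a)) a u <-> Sx x a (t * u)).
Proof.
rewrite /Sx /= => Ht.
have -> : a + u *: (a + t *: (x - a) - a) = a + (t * u) *: (x - a).
  by apply/rowP => i; rewrite !mxE; ring.
by rewrite Ht mulrA [u * t]mulrC.
Qed.

Lemma F3 x a s u : xi x a -> 0 < s -> Sx x a s -> 0 <= u <= s -> Sx x a u.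
Proof.
move=> Hxa s0 Hs /andP[u0 us].
have hu : 0 <= u / s <= 1.
  by rewrite divr_ge0 ?(ltW s0) //= ler_pdivrMr // mul1r.
have h := F1 _ _ _ (F2 _ _ _ Hxa s0 Hs) hu.
by have := (F4 _ _ _ _ Hs).1 h; rewrite mulrC mulfVK ?gt_eqF.
Qed.

Hypothesis Hsc : strictly_convex phi.

Lemma F6 x a b s : xi x a -> xi x b -> a != b -> Sx x a s -> s <= 1.
Proof.
move=> [Ka /= Ha] [Kb /= Hb] ab Hs.
rewrite leNgt; apply/negP => s1.
set y := a + s *: (x - a).
have E1 : x - y = (s - 1) *: (a - x).
  by apply/rowP => i; rewrite !mxE; ring.
have p1 : phi (x - y) = (s - 1) * d x.
  by rewrite E1 phiZp ?subr_ge0 ?ltW // phiB Ha.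
have p2 : phi (b - x) = d x by rewrite phiB.
have h1 : d y <= phi (b - y) := d_lb y _ Kb.
rewrite /Sx /= -/y in Hs.
have E2 : b - y = (x - y) + (b - x) by apply/rowP => i; rewrite !mxE; ring.
have Heq : phi ((x - y) + (b - x)) = phi (x - y) + phi (b - x).
  apply/eqP; rewrite eq_le phiD /= -E2 p1 p2.
  rewrite Hs in h1; apply: le_trans h1; lra.
have := Hsc _ _ Heq; rewrite p1 p2 => E3.
have [dx0|dx0] := eqVneq (d x) 0.
  move: Ha Hb; rewrite dx0 => /phi_eq0/eqP; rewrite subr_eq0 => /eqP xa.
  by move/phi_eq0/eqP; rewrite subr_eq0 => /eqP xb; rewrite -xa -xb eqxx in ab.
have c0 : (s - 1) * d x != 0 by rewrite mulf_neq0 // subr_eq0 gt_eqF.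
move/negP: ab; apply; apply/eqP/rowP => i.
have := congr1 (fun M : V => M 0 i) E3; rewrite /y !mxE => Ei.
apply/eqP; rewrite -subr_eq0; apply/eqP; apply: (mulfI c0); rewrite mulr0.
rewrite (_ : (s - 1) * d x * (a 0 i - b 0 i) = d x * (x 0 i - (a 0 i + s * (x 0 i - a 0 i)))
   - (s - 1) * d x * (b 0 i - x 0 i)); first by rewrite Ei subrr.
ring.
Qed.

Lemma rho_ge1 x a : (1%:E <= rho_at phi K x a)%E.
Proof. by rewrite rho_atE; apply: ereal_sup_ubound; exists 1 => //; exact: F5. Qed.

Lemma rho_at1 x a b : xi x a -> xi x b -> a != b -> rho_at phi K x a = 1%:E.
Proof.
move=> Ha Hb ab; apply/eqP; rewrite eq_le rho_ge1 andbT rho_atE.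
apply: ge_ereal_sup => _ [s Hs <-]; rewrite lee_fin.
exact: F6 Ha Hb ab Hs.
Qed.

Lemma F7 x a : xi x a -> rho_phi phi K x = rho_at phi K x a.
Proof.
move=> Ha; rewrite /rho_phi.
have Hb := xgetI 0 Ha.
set b := xget 0 (xi x) in Hb *.
have [->//|ba] := eqVneq b a.
by rewrite (rho_at1 _ _ _ Hb Ha ba) (rho_at1 _ _ _ Ha Hb) // eq_sym.
Qed.

Lemma rho_scale x a t : xi x a -> 0 < t -> Sx x a t ->
  rho_at phi K x a = (t%:E * rho_at phi K (a + t *: (x - a)) a)%E.
Proof.
move=> Ha t0 Ht; rewrite /rho_at -(ereal_sup_pZl _ t0); congr ereal_sup.
apply/seteqP; split => z /=.
  move=> [s Hs <-]; have tn0 : t != 0 by rewrite gt_eqF.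
  exists (s / t)%:E; last by rewrite -EFinM mulrC divfK.
  exists (s / t) => //; apply: (F4 _ _ _ _ Ht).2.
  by rewrite mulrC divfK.
move=> [_ [u Hu <-] <-]; exists (t * u); last by rewrite EFinM.
exact: ((F4 _ _ _ _ Ht).1 Hu).
Qed.


Lemma g_cont (a v : V) c : continuous (fun s : R => d (a + s *: v) - s * c).
Proof.
apply: (@lipR _ (phi v + `|c|)); first by rewrite addr_ge0 ?phi_ge0.
move=> s s'.
have h1 := d_lip (a + s *: v) (a + s' *: v).
have E : a + s *: v - (a + s' *: v) = (s - s') *: v.
  by apply/rowP => i; rewrite !mxE; ring.
rewrite E phiZ in h1.
have -> : d (a + s *: v) - s * c - (d (a + s' *: v) - s' * c) =
  (d (a + s *: v) - d (a + s' *: v)) - (s - s') * c by ring.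
apply: le_trans (ler_normB _ _) _.
rewrite normrM mulrDl [_ * `|s - s'|]mulrC; apply: lerD => //.
by rewrite mulrC.
Qed.

Lemma claim3 x a t : xi x a -> 0 < t -> (t%:E <= rho_at phi K x a)%E -> Sx x a t.
Proof.
move=> Ha t0 Ht.
have [[s [Hs ts]]|N] := pselect (exists s, Sx x a s /\ t <= s).
  by apply: (F3 _ _ _ _ Ha (lt_le_trans t0 ts) Hs); rewrite (ltW t0) ts.
have := @sup_attained (Sx x a) (fun s => d (a + s *: (x - a)) - s * d x) t
  (g_cont a (x - a) (d x) t).
rewrite /Sx /=; move=> H; apply/eqP; rewrite -subr_eq0; apply/eqP; apply: H => //.
move=> s Hs; split; first by rewrite Hs subrr.
by rewrite leNgt; apply/negP => st; apply: N; exists s; split => //; exact: ltW.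
Qed.

Arguments F2 {x a s}. Arguments F3 {x a s u}. Arguments F7 {x a}.
Arguments claim3 {x a t}. Arguments rho_scale {x a t}.

Lemma part3 x a t : xi x a -> 0 < t -> (t%:E <= rho_phi phi K x)%E ->
  rho_phi phi K x = (t%:E * rho_phi phi K (a + t *: (x - a)))%E.
Proof.
move=> Ha t0; rewrite (F7 Ha) => Ht.
have St := claim3 Ha t0 Ht.
by rewrite (rho_scale Ha t0 St) (F7 (F2 Ha t0 St)).
Qed.

Lemma part4a x : cut_phi phi K x -> rho_phi phi K x = 1%:E.
Proof.
move=> [a [eta [[Ka pe [s0 s00 Hs0]] [r [Hr ->]]]]].
pose T := [set s : R | 0 < s /\ d (a + s *: eta) = s].
have HrT : ereal_sup [set s%:E | s in T] = r%:E by [].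
have ubT : forall s, T s -> s <= r.
  by move=> s Ts; rewrite -lee_fin -HrT; apply: ereal_sup_ubound; exists s.
have s0r : s0 <= r by apply: ubT.
have gr := @sup_attained T (fun s => d (a + s *: eta) - s * 1) r
  (g_cont a eta 1 r).
have dr : d (a + r *: eta) = r.
  apply/eqP; rewrite -subr_eq0 -[X in _ - X]mulr1; apply/eqP; apply: gr.
    move=> s Hs; split; last exact: ubT.
    by case: Hs => _ ->; rewrite mulr1 subrr.
  by rewrite HrT.
have r0 : 0 < r := lt_le_trans s00 s0r.
have Hxa : xi (a + r *: eta) a.
  by split => //=; rewrite addBl phiZp ?ltW // pe mulr1 dr.
rewrite (F7 Hxa); apply/eqP; rewrite eq_le rho_ge1 andbT rho_atE.
apply: ge_ereal_sup => _ [u Hu <-]; rewrite lee_fin.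
have [u0|u0] := leP u 0; first by apply: le_trans u0 _.
move: Hu; rewrite /Sx /= addBl scalerA dr => Hu.
have : ((u * r)%:E <= r%:E)%E by rewrite -HrT; apply: ereal_sup_ubound; exists (u * r) => //; split => //; exact: mulr_gt0.
by rewrite lee_fin -{2}[r]mul1r ler_pM2r.
Qed.

Lemma part4b x : rho_phi phi K x = 1%:E -> cut_phi phi K x.
Proof.
have [a Ha] := nearest x; rewrite (F7 Ha) => H1.
have [Ka Hax] := Ha; move: Hax => /= Hax.
have [d0|dpos] := eqVneq (d x) 0.
  exfalso.
  have xa : x = a by move: Hax; rewrite d0 => /phi_eq0/eqP; rewrite subr_eq0 => /eqP.
  have S2 : Sx x a 2 by rewrite /Sx /= -xa subrr scaler0 addr0 d0 mulr0.
  have : (2%:E <= rho_at phi K x a)%E by rewrite rho_atE; apply: ereal_sup_ubound; exists 2.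
  rewrite H1 lee_fin; lra.
have dp : 0 < d x by rewrite lt_def dpos d_ge0.
pose eta := (d x)^-1 *: (x - a).
have pe : phi eta = 1 by rewrite phiZp ?invr_ge0 ?d_ge0 // Hax mulVf.
have xe : a + d x *: eta = x.
  by rewrite /eta scalerA mulfV // scale1r addrC subrK.
exists a, eta; split.
  by split => //; exists (d x) => //; rewrite xe.
exists (d x); split; last by rewrite xe.
apply/eqP; rewrite eq_le; apply/andP; split.
  apply: ge_ereal_sup => _ [s [s0 Hs] <-]; rewrite lee_fin.
  have Ss : Sx x a (s / d x).
    rewrite /Sx /= (_ : a + s / d x *: (x - a) = a + s *: eta).
      by rewrite Hs divfK.
    by apply/rowP => i; rewrite !mxE; ring.
  have : ((s / d x)%:E <= rho_at phi K x a)%E by rewrite rho_atE; apply: ereal_sup_ubound; exists (s / d x).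
  by rewrite H1 lee_fin ler_pdivrMr // mul1r.
by apply: ereal_sup_ubound; exists (d x) => //; split => //; rewrite xe.
Qed.

Lemma usc : upper_semicontinuous (rho_phi phi K).
Proof.
move=> x c Hxc.
have [a Ha] := nearest x.
have H1 : (1%:E <= rho_phi phi K x)%E by rewrite (F7 Ha); exact: rho_ge1.
have [r Er] : exists r, rho_phi phi K x = r%:E.
  move: H1 Hxc; case: (rho_phi phi K x) => [r _ _| | ] //; first by exists r.
rewrite Er lte_fin in Hxc; rewrite Er lee_fin in H1.
pose s0 := (r + c) / 2.
have rs0 : r < s0 by rewrite /s0; lra.
have s0c : s0 < c by rewrite /s0; lra.
have s0p : 0 < s0 by lra.
pose B := K `&` [set b | phi (x - b) <= d x + 1].
pose h := fun b : V => `|phi (x - b) - d x| + `|d (b + s0 *: (x - b)) - s0 * d x|.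
have hc : continuous h.
  apply: (@lip_contL h (1 + `|1 - s0|)); first by rewrite addr_ge0.
  move=> b b'.
  have e1 : `|(phi (x - b) - d x) - (phi (x - b') - d x)| <= phi (b - b').
    rewrite (_ : phi (x - b) - d x - (phi (x - b') - d x) = phi (x - b) - phi (x - b')); last by ring.
    apply: le_trans (phi_lip _ _) _.
    rewrite (_ : x - b - (x - b') = b' - b); first by rewrite phiB.
    by apply/rowP => i; rewrite !mxE; ring.
  have e2 : `|(d (b + s0 *: (x - b)) - s0 * d x) - (d (b' + s0 *: (x - b')) - s0 * d x)|
      <= `|1 - s0| * phi (b - b').
    rewrite (_ : d (b + s0 *: (x - b)) - s0 * d x - (d (b' + s0 *: (x - b')) - s0 * d x) = d (b + s0 *: (x - b)) - d (b' + s0 *: (x - b'))); last by ring.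
    apply: le_trans (d_lip _ _) _.
    rewrite (_ : _ - _ = (1 - s0) *: (b - b')) ?phiZ //.
    by apply/rowP => i; rewrite !mxE; ring.
  rewrite /h.
  set A := phi (x - b) - d x; set A' := phi (x - b') - d x.
  set D := d (b + s0 *: (x - b)) - s0 * d x; set D' := d (b' + s0 *: (x - b')) - s0 * d x.
  have f1 := ler_dist_dist A A'.
  have f2 := ler_dist_dist D D'.
  have f3 := ler_normD (`|A| - `|A'|) (`|D| - `|D'|).
  rewrite (_ : `|A| + `|D| - (`|A'| + `|D'|) = (`|A| - `|A'|) + (`|D| - `|D'|)); last by ring.
  apply: le_trans f3 _; rewrite mulrDl mul1r; apply: lerD.
    exact: le_trans f1 e1.
  exact: le_trans f2 e2.
have B0 : B !=set0 by exists a; case: Ha => Ka Hxa; split => //=; rewrite Hxa lerDl.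
have [bm Bbm bmin] := EVT_min_rV B0 (Bcompact x (d x + 1)) (@continuous_subspaceT _ _ B _ hc).
pose m := h bm.
have m0 : 0 < m.
  rewrite lt_def addr_ge0 // andbT; apply/negP => /eqP.
  move/eqP; rewrite paddr_eq0 // !normr_eq0 !subr_eq0 => /andP[/eqP e1 /eqP e2].
  move: Bbm; rewrite inE => -[Kbm _].
  have Hbm : xi x bm by split.
  have : (s0%:E <= rho_at phi K x bm)%E.
    by rewrite rho_atE; apply: ereal_sup_ubound; exists s0.
  by rewrite -(F7 Hbm) Er lee_fin leNgt rs0.
pose eta := Num.min (1 / 2) (m / (4 + 4 * s0)).
have eta0 : 0 < eta by rewrite lt_min; apply/andP; split; [lra | apply: divr_gt0 => //; lra].
have eta1 : eta <= 1 / 2 by rewrite ge_min lexx.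
have eta2 : (4 + 4 * s0) * eta <= m.
  rewrite mulrC -ler_pdivlMr; last lra.
  by rewrite ge_min lexx orbT.
have fc : continuous (fun y : V => phi (y - x)).
  apply: lip_cont => y z; apply: le_trans (phi_lip _ _) _.
  by rewrite (_ : y - x - (z - x) = y - z) //; apply/rowP => i; rewrite !mxE; ring.
have Hn := (@cvgrPdist_lt _ _ _ (nbhs x) (nbhs_filter x) (fun y => phi (y - x)) (phi (x - x))).1 (fc x) eta eta0.
exists [set y | `|phi (x - x) - phi (y - x)| < eta] => //.
move=> y /=; rewrite subrr phi0 sub0r normrN ger0_norm ?phi_ge0 // => Hy.
rewrite ltNge; apply/negP => Hcy.
have [a' Ha'] := nearest y.
rewrite (F7 Ha') in Hcy.
have : (s0%:E < rho_at phi K y a')%E by apply: lt_le_trans Hcy; rewrite lte_fin.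
rewrite rho_atE => /ereal_sup_gt [_ [s Hs <-]]; rewrite lte_fin => s0s.
have Hs0 : Sx y a' s0 by apply: (F3 Ha' (lt_trans s0p s0s) Hs); rewrite (ltW s0p) ltW.
have [Ka' Hya'] := Ha'; move: Hya' => /= Hya'.
have dl := d_lip y x.
have dl' : `|d y - d x| <= phi (y - x) by [].
have pyx : phi (x - y) = phi (y - x) by rewrite phiB.
have Ba' : B a'.
  split => //=.
  have := phiD (x - y) (y - a'); rewrite addrA subrK Hya' pyx.
  move: dl'; rewrite ler_norml => /andP[_ ?]; lra.
have hm : m <= h a' by apply: bmin; rewrite inE.
have g1 : `|phi (x - a') - d x| <= 2 * phi (y - x).
  have := phi_lip (x - a') (y - a').
  rewrite (_ : x - a' - (y - a') = x - y); last by apply/rowP => i; rewrite !mxE; ring.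
  rewrite Hya' pyx => q1.
  have := ler_normD (phi (x - a') - d y) (d y - d x).
  rewrite (_ : phi (x - a') - d y + (d y - d x) = phi (x - a') - d x); last by ring.
  lra.
have g2 : `|d (a' + s0 *: (x - a')) - s0 * d x| <= 2 * s0 * phi (y - x).
  have := d_lip (a' + s0 *: (x - a')) (a' + s0 *: (y - a')).
  rewrite (_ : a' + s0 *: (x - a') - (a' + s0 *: (y - a')) = s0 *: (x - y)); last first.
    by apply/rowP => i; rewrite !mxE; ring.
  rewrite phiZp ?(ltW s0p) // pyx.
  move: Hs0; rewrite /Sx /= => ->.
  move=> q1.
  have := ler_normD (d (a' + s0 *: (x - a')) - s0 * d y) (s0 * d y - s0 * d x).
  rewrite (_ : d (a' + s0 *: (x - a')) - s0 * d y + (s0 * d y - s0 * d x)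
     = d (a' + s0 *: (x - a')) - s0 * d x); last by ring.
  rewrite -mulrBr normrM ger0_norm ?(ltW s0p) // => q2.
  have q3 : s0 * `|d y - d x| <= s0 * phi (y - x) by rewrite ler_wpM2l ?(ltW s0p).
  lra.
have q4 : s0 * phi (y - x) <= s0 * eta by rewrite ler_wpM2l ?(ltW s0p) ?ltW.
move: hm; rewrite /h; nra.
Qed.
End S.

Theorem lemma2p33 (R : realType) (n : nat) (phi : 'rV[R]_n -> R) (K : set 'rV[R]_n)
  (Hnorm : is_norm phi) (Hsc : strictly_convex phi) (HC2 : C2_off_origin phi)
  (HK : closed K) (HK0 : K !=set0) :
  [/\ (forall x, (1%:E <= rho_phi phi K x)%E),
      upper_semicontinuous (rho_phi phi K),
      (forall (x a : 'rV[R]_n) (t : R), xi_phi phi K x a -> 0 < t ->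
          (t%:E <= rho_phi phi K x)%E ->
          rho_phi phi K x = (t%:E * rho_phi phi K (a + t *: (x - a)))%E) &
      cut_phi phi K = [set x | rho_phi phi K x = 1%:E]].
Proof.
split.
- by move=> x; exact: rho_ge1.
- exact: (@usc _ _ _ _ Hnorm HK HK0 Hsc).
- by move=> x a t Ha t0 Ht; exact: (@part3 _ _ _ _ Hnorm HK0 Hsc _ _ _ Ha t0 Ht).
- apply/seteqP; split => x /=.
    exact: (@part4a _ _ _ _ Hnorm HK0 Hsc x).
  exact: (@part4b _ _ _ _ Hnorm HK HK0 Hsc x).
Qed.
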